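(* The outer length billiard map $T$ and its square $T^2$ are positive twist maps of the phase cylinder in the coordinates $(\alpha,R)$. That is, if $(\alpha',R')=T(\alpha,R)$ and $(\alpha'',R'')=T^2(\alpha,R)$, then $\partial\alpha'/\partial R>0$ and $\partial\alpha''/\partial R>0$ everywhere.
   Context: Let $\gamma$ be an oval: a smooth closed curve in $\mathbb R^2$ with everywhere positive curvature, oriented counterclockwise. Its support function is a smooth $2\pi$-periodic $p$ with $p+p''>0$. $L(\alpha)=\{x\cos\alpha+y\sin\alpha=p(\alpha)\}$ is the tangent line with outer normal $(\cos\alpha,\sin\alpha)$, touching $\gamma$ at $\gamma(\alpha)=p(\alpha)(\cos\alpha,\sin\alpha)+p'(\alpha)(-\sin\alpha,\cos\alpha)$. Every exterior point is $M=L(\alpha_1)\cap L(\alpha_2)$ with $\alpha_1<\alpha_2<\alpha_1+\pi$. Set $\omega=\alpha_2-\alpha_1$, $l_j=|M-\gamma(\alpha_j)|$ and $R_j=l_j\tan(\omega/2)$. Here $R_j$ is the radius of the circle tangent to $L(\alpha_j)$ at $\gamma(\alpha_j)$, tangent to the other line, and lying on the side of $L(\alpha_j)$ not containing $\gamma$. The outer length billiard map is $T(M)=L(\alpha_2)\cap L(\alpha_3)$, where $\alpha_3\in(\alpha_2,\alpha_2+\pi)$ is defined as follows. Let $K$ be the circle tangent to $L(\alpha_2)$ at $\gamma(\alpha_2)$, on the side of $L(\alpha_2)$ not containing $\gamma$, and tangent to $L(\alpha_1)$. Then $L(\alpha_3)$ is the common tangent line of $\gamma$ and $K$, other than $L(\alpha_1)$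 and $L(\alpha_2)$, leaving $\gamma$ and $K$ on the same side. Equivalently, the radius $R_1$ of $T(M)$ equals the radius $R_2$ of $M$. Phase coordinates: $M\mapsto(\alpha,R):=(\alpha_1,R_1)$. *)

(* Defs.v *)
From Stdlib Require Import Reals.
From Coquelicot Require Import Coquelicot.
Open Scope R_scope.

Definition smooth (f : R -> R) : Prop :=
  forall (n : nat) (x : R), ex_derive (Derive_n f n) x.

Definition oval_support (p : R -> R) : Prop :=
  smooth p /\
  (forall x, p (x + 2 * PI) = p x) /\
  (forall x, p x + Derive_n p 2 x > 0).

(* Tangency point gamma(a) = p(a)(cos a, sin a) + p'(a)(-sin a, cos a). *)
Definition gam (p : R -> R) (a : R) : R * R :=
  (p a * cos a - Derive p a * sin a, p a * sin a + Derive p a * cos a).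

(* M = L(a1) ∩ L(a2), where L(a) = {x cos a + y sin a = p(a)} (a1 < a2 < a1+pi). *)
Definition inter (p : R -> R) (a1 a2 : R) : R * R :=
  ((p a1 * sin a2 - p a2 * sin a1) / sin (a2 - a1),
   (p a2 * cos a1 - p a1 * cos a2) / sin (a2 - a1)).

Definition dist2 (u v : R * R) : R :=
  sqrt ((fst u - fst v) ^ 2 + (snd u - snd v) ^ 2).

Definition Rad1 (p : R -> R) (a1 a2 : R) : R :=
  dist2 (inter p a1 a2) (gam p a1) * tan ((a2 - a1) / 2).
Definition Rad2 (p : R -> R) (a1 a2 : R) : R :=
  dist2 (inter p a1 a2) (gam p a2) * tan ((a2 - a1) / 2).

(* A realizes the inverse of the phase coordinates (a1,a2) |-> (a1, R1):
   for a phase point (a,R), A a R is the second angle a2 of the exterior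
   point M with coordinates (a,R). *)
Definition phase_inverse (p : R -> R) (A : R -> R -> R) : Prop :=
  forall a r, 0 < r -> a < A a r < a + PI /\ Rad1 p a (A a r) = r.

(* In phase coordinates, T(a,R) = (a', R') with a' = a2 and R' = R2(a1,a2)
   (since R1(T M) = R2(M)). *)
Definition T_alpha (p : R -> R) (A : R -> R -> R) (a r : R) : R := A a r.
Definition T_R (p : R -> R) (A : R -> R -> R) (a r : R) : R := Rad2 p a (A a r).
Definition T2_alpha (p : R -> R) (A : R -> R -> R) (a r : R) : R :=
  T_alpha p A (T_alpha p A a r) (T_R p A a r).

(* Main.v *)
Require Import Defs.
From Stdlib Require Import Reals Lra Psatz ClassicalEpsilon.
From Coquelicot Require Import Coquelicot.
Open Scope R_scope.

Definition hyp (p : R -> R) : Prop :=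
  (forall x, ex_derive p x) /\ (forall x, ex_derive (Derive p) x) /\
  (forall x, p x + Derive (Derive p) x > 0).

Lemma hyp_of p : oval_support p -> hyp p.
Proof.
  intros [Hs [_ Hr]]. split; [|split].
  - intro x. exact (Hs 0%nat x).
  - intro x. exact (Hs 1%nat x).
  - intro x. exact (Hr x).
Qed.

Lemma dl_mult f g x a b : derivable_pt_lim f x a -> derivable_pt_lim g x b ->
  derivable_pt_lim (fun t => f t * g t) x (a * g x + f x * b).
Proof. intros. apply (derivable_pt_lim_mult f g x a b); auto. Qed.
Lemma dl_plus f g x a b : derivable_pt_lim f x a -> derivable_pt_lim g x b ->
  derivable_pt_lim (fun t => f t + g t) x (a + b).
Proof. intros. apply (derivable_pt_lim_plus f g x a b); auto. Qed.
Lemma dl_minus f g x a b : derivable_pt_lim f x a -> derivable_pt_lim g x b ->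
  derivable_pt_lim (fun t => f t - g t) x (a - b).
Proof. intros. apply (derivable_pt_lim_minus f g x a b); auto. Qed.
Lemma dl_eq f x a b : derivable_pt_lim f x a -> a = b -> derivable_pt_lim f x b.
Proof. intros; subst; auto. Qed.

Lemma sturm (f f1 f2 w w1 : R -> R) a b : a < b ->
  (forall t, derivable_pt_lim f t (f1 t)) -> (forall t, derivable_pt_lim f1 t (f2 t)) ->
  (forall t, derivable_pt_lim w t (w1 t)) -> (forall t, derivable_pt_lim w1 t (- w t)) ->
  (forall t, a < t < b -> (f2 t + f t) * w t > 0) ->
  f1 a * w a - f a * w1 a < f1 b * w b - f b * w1 b.
Proof.
  intros Hab Hf Hf1 Hw Hw1 Hpos.
  destruct (MVT_cor2 (fun t => f1 t * w t - f t * w1 t)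
     (fun t => (f2 t + f t) * w t) a b Hab) as [c [Hc1 Hc2]].
  - intros c _. eapply dl_eq.
    + apply dl_minus; apply dl_mult; auto.
    + ring.
  - specialize (Hpos c Hc2). nra.
Qed.

Ltac fix_eta := repeat match goal with |- context [Derive (fun x0 => ?g x0) ?t] =>
  let E := fresh in assert (E : Derive (fun x0 => g x0) t = Derive g t) by reflexivity;
  rewrite E; clear E end.

Ltac dsolve H1 H2 := apply is_derive_Reals; auto_derive;
  [ repeat split; auto | fix_eta; unfold Rminus; ring ].

Definition Fn p x y := p y - p x * cos (y - x) - Derive p x * sin (y - x).
Definition Fd p x y := Derive p y + p x * sin (y - x) - Derive p x * cos (y - x).
Definition En p x y := p x - p y * cos (y - x) + Derive p y * sin (y - x).
Definition Ed p x y := Derive p x - p y * sin (y - x) - Derive p y * cos (y - x).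

Lemma F_pos p : hyp p -> forall x b, x < b <= x + PI -> Fn p x b > 0.
Proof.
  intros [H1 [H2 H3]] x b Hb.
  assert (S := sturm (Fn p x) (Fd p x)
    (fun t => Derive (Derive p) t + p x * cos (t-x) + Derive p x * sin (t-x))
    (fun t => sin (b - t)) (fun t => - cos (b - t)) x b).
  unfold Fn, Fd in *.
  replace (x - x) with 0 in S by ring. replace (b - b) with 0 in S by ring.
  rewrite cos_0, sin_0 in S.
  assert (0 < 0 - (p b - p x * cos (b - x) - Derive p x * sin (b - x)) * - 1) ; [|lra].
  replace 0 with ((Derive p x + p x * 0 - Derive p x * 1) * sin (b - x) -
    (p x - p x * 1 - Derive p x * 0) * - cos (b - x)) at 1 by ring.
  replace (0 - (p b - p x * cos (b - x) - Derive p x * sin (b - x)) * -1) with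
   ((Derive p b + p x * sin (b - x) - Derive p x * cos (b - x)) * 0 -
      (p b - p x * cos (b - x) - Derive p x * sin (b - x)) * -1) by ring.
  apply S; try lra.
  - intro t. dsolve H1 H2.
  - intro t. dsolve H1 H2.
  - intro t. dsolve H1 H2.
  - intro t. dsolve H1 H2.
  - intros t Ht. apply Rmult_lt_0_compat.
    + specialize (H3 t). lra.
    + apply sin_gt_0; lra.
Qed.

Lemma Q_pos p : hyp p -> forall x b, x < b < x + PI ->
  Fd p x b * cos ((b - x) / 2) + Fn p x b * sin ((b - x) / 2) > 0.
Proof.
  intros [H1 [H2 H3]] x b Hb.
  set (m := (x + b) / 2).
  assert (S := sturm (Fn p x) (Fd p x)
    (fun t => Derive (Derive p) t + p x * cos (t-x) + Derive p x * sin (t-x))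
    (fun t => cos (m - t)) (fun t => sin (m - t)) x b).
  unfold Fn, Fd in *.
  replace (x - x) with 0 in S by ring.
  replace (m - b) with (- ((b - x) / 2)) in S by (unfold m; field).
  rewrite cos_0, sin_0, cos_neg, sin_neg in S.
  assert (0 < (Derive p b + p x * sin (b - x) - Derive p x * cos (b - x)) * cos ((b - x) / 2) -
     (p b - p x * cos (b - x) - Derive p x * sin (b - x)) * - sin ((b - x) / 2)); [|lra].
  replace 0 with ((Derive p x + p x * 0 - Derive p x * 1) * cos (m - x) -
    (p x - p x * 1 - Derive p x * 0) * sin (m - x)) at 1 by ring.
  apply S; try lra.
  - intro t. dsolve H1 H2.
  - intro t. dsolve H1 H2.
  - intro t. dsolve H1 H2.
  - intro t. dsolve H1 H2.
  - intros t Ht. apply Rmult_lt_0_compat.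
    + specialize (H3 t). lra.
    + apply cos_gt_0; unfold m; lra.
Qed.

Lemma E_pos p : hyp p -> forall x y, x < y < x + PI -> En p x y > 0.
Proof.
  intros [H1 [H2 H3]] x y Hb.
  assert (S := sturm (fun t => En p t y) (fun t => Ed p t y)
    (fun t => Derive (Derive p) t + p y * cos (y - t) - Derive p y * sin (y - t))
    (fun t => sin (t - x)) (fun t => cos (t - x)) x y).
  unfold En, Ed in *.
  replace (x - x) with 0 in S by ring. replace (y - y) with 0 in S by ring.
  rewrite cos_0, sin_0 in S.
  assert (D1 : forall t, derivable_pt_lim (fun t => p t - p y * cos (y - t) + Derive p y * sin (y - t)) t
     (Derive p t - p y * sin (y - t) - Derive p y * cos (y - t))) by (intro t; dsolve H1 H2).
  assert (D2 : forall t, derivable_pt_lim (fun t => Derive p t - p y * sin (y - t) - Derive p y * cos (y - t)) t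
     (Derive (Derive p) t + p y * cos (y - t) - Derive p y * sin (y - t))) by (intro t; dsolve H1 H2).
  assert (D3 : forall t, derivable_pt_lim (fun t => sin (t - x)) t (cos (t - x))) by (intro t; dsolve H1 H2).
  assert (D4 : forall t, derivable_pt_lim (fun t => cos (t - x)) t (- sin (t - x))) by (intro t; dsolve H1 H2).
  assert (P : forall t, x < t < y -> (Derive (Derive p) t + p y * cos (y - t) - Derive p y * sin (y - t) +
     (p t - p y * cos (y - t) + Derive p y * sin (y - t))) * sin (t - x) > 0).
  { intros t Ht. apply Rmult_lt_0_compat.
    + specialize (H3 t). lra.
    + apply sin_gt_0; lra. }
  specialize (S ltac:(lra) D1 D2 D3 D4 P). lra.
Qed.

Definition Phe p x y := Fn p x y / (1 + cos (y - x)).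
Definition Pse p x y := En p x y / (1 + cos (y - x)).

Lemma half_facts x y : x < y < x + PI ->
  let h := (y - x) / 2 in 0 < sin h /\ 0 < cos h /\ sin (y - x) = 2 * sin h * cos h /\
   1 + cos (y - x) = 2 * cos h * cos h /\ 0 < sin (y - x) /\ 0 < 1 + cos (y - x).
Proof.
  intros Hb h.
  assert (E : y - x = 2 * h) by (unfold h; field).
  assert (0 < sin h) by (apply sin_gt_0; unfold h; lra).
  assert (0 < cos h) by (apply cos_gt_0; unfold h; lra).
  rewrite E, sin_2a, cos_2a_cos. repeat split; try nra; ring.
Qed.

Lemma sqrt_sq_pos k a b : 0 <= k -> sin a ^ 2 + cos a ^ 2 = 1 ->
  sqrt ((k * b) ^ 2 + (k * cos a) ^ 2) = k * 1 -> True.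
Proof. auto. Qed.

Lemma Rad1_eq p x y : x < y < x + PI -> Fn p x y >= 0 -> Rad1 p x y = Phe p x y.
Proof.
  intros Hb HF. destruct (half_facts x y Hb) as [Hs [Hc [ES [EC [HS HC]]]]].
  set (h := (y - x) / 2) in *.
  unfold Rad1, dist2, inter, gam, Phe. simpl.
  set (k := Fn p x y / sin (y - x)).
  assert (Hk : 0 <= k) by (unfold k; apply Rdiv_le_0_compat; lra).
  assert (E1 : (p x * sin y - p y * sin x) / sin (y - x) - (p x * cos x - Derive p x * sin x) = - k * sin x).
  { assert (P : (p x * sin y - p y * sin x) - (p x * cos x - Derive p x * sin x) * sin (y - x) = - Fn p x y * sin x).
    { assert (Hx := sin2_cos2 x). unfold Rsqr in Hx.
      assert (Q : (p x * sin y - p y * sin x) - (p x * cos x - Derive p x * sin x) * sin (y - x) - - Fn p x y * sin x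
        = p x * sin y * (1 - (sin x * sin x + cos x * cos x))) by (unfold Fn; rewrite sin_minus, cos_minus; ring).
      rewrite Hx in Q. lra. }
    unfold k. apply (Rmult_eq_reg_r (sin (y - x))); [|lra].
    replace (((p x * sin y - p y * sin x) / sin (y - x) - (p x * cos x - Derive p x * sin x)) * sin (y - x))
      with ((p x * sin y - p y * sin x) - (p x * cos x - Derive p x * sin x) * sin (y - x)) by (field; lra).
    rewrite P. field. lra. }
  assert (E2 : (p y * cos x - p x * cos y) / sin (y - x) - (p x * sin x + Derive p x * cos x) = k * cos x).
  { assert (Hx := sin2_cos2 x). unfold Rsqr in Hx.
    assert (Q : (p y * cos x - p x * cos y) - (p x * sin x + Derive p x * cos x) * sin (y - x) - Fn p x y * cos x
        = p x * cos y * (sin x * sin x + cos x * cos x - 1)) by (unfold Fn; rewrite sin_minus, cos_minus; ring).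
    rewrite Hx in Q.
    unfold k. apply (Rmult_eq_reg_r (sin (y - x))); [|lra].
    replace (((p y * cos x - p x * cos y) / sin (y - x) - (p x * sin x + Derive p x * cos x)) * sin (y - x))
      with ((p y * cos x - p x * cos y) - (p x * sin x + Derive p x * cos x) * sin (y - x)) by (field; lra).
    field_simplify; lra. }
  rewrite E1, E2.
  assert (Hx := sin2_cos2 x). unfold Rsqr in Hx.
  replace (- k * sin x * (- k * sin x * 1) + k * cos x * (k * cos x * 1)) with (k * k) by (transitivity (k * k * (sin x * sin x + cos x * cos x)); [rewrite Hx; ring | ring]).
  rewrite sqrt_square by lra.
  unfold k, tan. fold h. rewrite EC, ES. field. lra.
Qed.

Lemma Rad2_eq p x y : x < y < x + PI -> En p x y >= 0 -> Rad2 p x y = Pse p x y.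
Proof.
  intros Hb HF. destruct (half_facts x y Hb) as [Hs [Hc [ES [EC [HS HC]]]]].
  set (h := (y - x) / 2) in *.
  unfold Rad2, dist2, inter, gam, Pse. simpl.
  set (k := En p x y / sin (y - x)).
  assert (Hk : 0 <= k) by (unfold k; apply Rdiv_le_0_compat; lra).
  assert (Hy := sin2_cos2 y). unfold Rsqr in Hy.
  assert (E1 : (p x * sin y - p y * sin x) / sin (y - x) - (p y * cos y - Derive p y * sin y) = k * sin y).
  { assert (Q : (p x * sin y - p y * sin x) - (p y * cos y - Derive p y * sin y) * sin (y - x) - En p x y * sin y
        = p y * sin x * (sin y * sin y + cos y * cos y - 1)) by (unfold En; rewrite sin_minus, cos_minus; ring).
    rewrite Hy in Q.
    unfold k. apply (Rmult_eq_reg_r (sin (y - x))); [|lra].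
    replace (((p x * sin y - p y * sin x) / sin (y - x) - (p y * cos y - Derive p y * sin y)) * sin (y - x))
      with ((p x * sin y - p y * sin x) - (p y * cos y - Derive p y * sin y) * sin (y - x)) by (field; lra).
    field_simplify; lra. }
  assert (E2 : (p y * cos x - p x * cos y) / sin (y - x) - (p y * sin y + Derive p y * cos y) = - k * cos y).
  { assert (Q : (p y * cos x - p x * cos y) - (p y * sin y + Derive p y * cos y) * sin (y - x) + En p x y * cos y
        = p y * cos x * (1 - (sin y * sin y + cos y * cos y))) by (unfold En; rewrite sin_minus, cos_minus; ring).
    rewrite Hy in Q.
    unfold k. apply (Rmult_eq_reg_r (sin (y - x))); [|lra].
    replace (((p y * cos x - p x * cos y) / sin (y - x) - (p y * sin y + Derive p y * cos y)) * sin (y - x))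
      with ((p y * cos x - p x * cos y) - (p y * sin y + Derive p y * cos y) * sin (y - x)) by (field; lra).
    field_simplify; lra. }
  rewrite E1, E2.
  replace (k * sin y * (k * sin y * 1) + - k * cos y * (- k * cos y * 1)) with (k * k)
    by (transitivity (k * k * (sin y * sin y + cos y * cos y)); [rewrite Hy; ring | ring]).
  rewrite sqrt_square by lra.
  unfold k, tan. fold h. rewrite EC, ES. field. lra.
Qed.

Lemma dd_eq f x y a b a' b' : differentiable_pt_lim f x y a b -> a = a' -> b = b' ->
  differentiable_pt_lim f x y a' b'.
Proof. intros; subst; auto. Qed.

Lemma dd_swap f x y a b : differentiable_pt_lim f x y a b ->
  differentiable_pt_lim (fun u v => f v u) y x b a.
Proof.
  intros H eps. destruct (H eps) as [d Hd]. exists d. intros u v Hu Hv.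
  rewrite Rmax_comm. specialize (Hd v u Hv Hu).
  replace (b * (u - y) + a * (v - x)) with (a * (v - x) + b * (u - y)) by ring. exact Hd.
Qed.

Lemma dd_fst h x y k : derivable_pt_lim h x k -> differentiable_pt_lim (fun u v => h u) x y k 0.
Proof. apply differentiable_pt_lim_proj1_0. Qed.

Lemma dd_snd h x y k : derivable_pt_lim h y k -> differentiable_pt_lim (fun u v => h v) x y 0 k.
Proof. intro H. apply (dd_swap (fun u v => h u) y x k 0). apply dd_fst. exact H. Qed.

Lemma Rmax_ge0 a b : 0 <= Rmax (Rabs a) (Rabs b).
Proof. apply Rle_trans with (Rabs a); [apply Rabs_pos | apply Rmax_l]. Qed.

Lemma dd_Rplus x y : differentiable_pt_lim (fun a b => a + b) x y 1 1.
Proof.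
  intros eps. exists eps. intros u v _ _.
  replace (u + v - (x + y) - (1 * (u - x) + 1 * (v - y))) with 0 by ring.
  rewrite Rabs_R0. apply Rmult_le_pos; [apply Rlt_le, cond_pos | apply Rmax_ge0].
Qed.

Lemma dd_Rminus x y : differentiable_pt_lim (fun a b => a - b) x y 1 (-1).
Proof.
  intros eps. exists eps. intros u v _ _.
  replace (u - v - (x - y) - (1 * (u - x) + -1 * (v - y))) with 0 by ring.
  rewrite Rabs_R0. apply Rmult_le_pos; [apply Rlt_le, cond_pos | apply Rmax_ge0].
Qed.

Lemma dd_Rmult x y : differentiable_pt_lim (fun a b => a * b) x y y x.
Proof.
  intros eps. exists eps. intros u v Hu Hv.
  replace (u * v - x * y - (y * (u - x) + x * (v - y))) with ((u - x) * (v - y)) by ring.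
  rewrite Rabs_mult.
  assert (A1 := Rmax_l (Rabs (u - x)) (Rabs (v - y))).
  assert (A2 := Rmax_r (Rabs (u - x)) (Rabs (v - y))).
  assert (A3 := Rabs_pos (u - x)). assert (A4 := Rabs_pos (v - y)).
  apply Rle_trans with (Rabs (u - x) * eps).
  - apply Rmult_le_compat_l; lra.
  - rewrite Rmult_comm. apply Rmult_le_compat_l; [apply Rlt_le, cond_pos| lra].
Qed.

Lemma dd_plus f g x y a b c d : differentiable_pt_lim f x y a b -> differentiable_pt_lim g x y c d ->
  differentiable_pt_lim (fun u v => f u v + g u v) x y (a + c) (b + d).
Proof.
  intros Hf Hg. eapply dd_eq.
  - apply (differentiable_pt_lim_comp (fun a b => a + b) f g x y); [apply dd_Rplus | exact Hf | exact Hg].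
  - ring. - ring.
Qed.

Lemma dd_minus f g x y a b c d : differentiable_pt_lim f x y a b -> differentiable_pt_lim g x y c d ->
  differentiable_pt_lim (fun u v => f u v - g u v) x y (a - c) (b - d).
Proof.
  intros Hf Hg. eapply dd_eq.
  - apply (differentiable_pt_lim_comp (fun a b => a - b) f g x y); [apply dd_Rminus | exact Hf | exact Hg].
  - ring. - ring.
Qed.

Lemma dd_mult f g x y a b c d : differentiable_pt_lim f x y a b -> differentiable_pt_lim g x y c d ->
  differentiable_pt_lim (fun u v => f u v * g u v) x y (a * g x y + f x y * c) (b * g x y + f x y * d).
Proof.
  intros Hf Hg. eapply dd_eq.
  - apply (differentiable_pt_lim_comp (fun a b => a * b) f g x y); [apply dd_Rmult | exact Hf | exact Hg].
  - ring. - ring.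
Qed.

Lemma dd_comp1 h f x y k a b : derivable_pt_lim h (f x y) k -> differentiable_pt_lim f x y a b ->
  differentiable_pt_lim (fun u v => h (f u v)) x y (k * a) (k * b).
Proof.
  intros Hh Hf. eapply dd_eq.
  - apply (differentiable_pt_lim_comp (fun s t => h s) f f x y); [apply dd_fst; exact Hh | exact Hf | exact Hf].
  - ring. - ring.
Qed.

Lemma dd_const c x y : differentiable_pt_lim (fun _ _ => c) x y 0 0.
Proof. apply (dd_fst (fun _ => c)). apply derivable_pt_lim_const. Qed.
Lemma dd_id1 x y : differentiable_pt_lim (fun u _ => u) x y 1 0.
Proof. apply (dd_fst (fun u => u)). apply derivable_pt_lim_id. Qed.
Lemma dd_id2 x y : differentiable_pt_lim (fun _ v => v) x y 0 1.
Proof. apply (dd_snd (fun u => u)). apply derivable_pt_lim_id. Qed.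

Lemma dl_p p : hyp p -> forall x, derivable_pt_lim p x (Derive p x).
Proof. intros [H1 _] x. apply is_derive_Reals. apply Derive_correct. apply H1. Qed.
Lemma dl_Dp p : hyp p -> forall x, derivable_pt_lim (Derive p) x (Derive (Derive p) x).
Proof. intros [_ [H2 _]] x. apply is_derive_Reals. apply Derive_correct. apply H2. Qed.
Lemma dl_inv z : z <> 0 -> derivable_pt_lim (fun t => / t) z (- / (z * z)).
Proof. intro Hz. apply is_derive_Reals. auto_derive; [auto | field; auto]. Qed.

Definition PX p x y := (- (p x + Derive (Derive p) x) * sin (y - x) * (1 + cos (y - x)) - Fn p x y * sin (y - x)) / ((1 + cos (y - x)) * (1 + cos (y - x))).
Definition PY p x y := (Fd p x y * (1 + cos (y - x)) + Fn p x y * sin (y - x)) / ((1 + cos (y - x)) * (1 + cos (y - x))).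

Lemma dd_cosd x y : differentiable_pt_lim (fun u v => cos (v - u)) x y (sin (y - x)) (- sin (y - x)).
Proof.
  eapply dd_eq.
  - apply (dd_comp1 cos (fun u v => v - u)). apply derivable_pt_lim_cos.
    apply dd_minus; [apply dd_id2 | apply dd_id1].
  - ring. - ring.
Qed.
Lemma dd_sind x y : differentiable_pt_lim (fun u v => sin (v - u)) x y (- cos (y - x)) (cos (y - x)).
Proof.
  eapply dd_eq.
  - apply (dd_comp1 sin (fun u v => v - u)). apply derivable_pt_lim_sin.
    apply dd_minus; [apply dd_id2 | apply dd_id1].
  - ring. - ring.
Qed.

Lemma Phe_diff p : hyp p -> forall x y, 1 + cos (y - x) <> 0 ->
  differentiable_pt_lim (Phe p) x y (PX p x y) (PY p x y).
Proof.
  intros H x y Hc. unfold Phe, Rdiv.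
  eapply dd_eq.
  - apply (dd_mult (fun u v => Fn p u v) (fun u v => / (1 + cos (v - u)))).
    + unfold Fn. apply dd_minus. apply dd_minus.
      * apply dd_snd. apply (dl_p p H).
      * apply (dd_mult (fun u v => p u) (fun u v => cos (v - u))).
        apply dd_fst, (dl_p p H). apply dd_cosd.
      * apply (dd_mult (fun u v => Derive p u) (fun u v => sin (v - u))).
        apply dd_fst, (dl_Dp p H). apply dd_sind.
    + apply (dd_comp1 (fun t => / t) (fun u v => 1 + cos (v - u))).
      apply dl_inv; auto.
      apply dd_plus; [apply dd_const | apply dd_cosd].
  - unfold PX, Fn. field. auto.
  - unfold PY, Fn, Fd. field. auto.
Qed.

Lemma ift (g : R -> R -> R) (w : R -> R) r ls ly :
  differentiable_pt_lim g r (w r) ls ly -> ly <> 0 -> continuity_pt w r ->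
  (exists d : posreal, forall s, Rabs (s - r) < d -> g s (w s) = g r (w r)) ->
  derivable_pt_lim w r (- ls / ly).
Proof.
  intros Hd Hly Hw [d0 Hd0] eps Heps.
  set (a := Rabs ly). assert (Ha : 0 < a) by (apply Rabs_pos_lt; auto).
  set (K := 2 * Rabs ls / a + 1).
  assert (HK : 1 <= K). { unfold K. assert (0 <= 2 * Rabs ls / a). { apply Rdiv_le_0_compat; [assert (Hh:=Rabs_pos ls); lra| lra]. } lra. }
  set (e1 := Rmin (a / 2) (eps * a / (2 * K))).
  assert (He1 : 0 < e1). { unfold e1. apply Rmin_pos; [lra|]. apply Rdiv_lt_0_compat; [nra | lra]. }
  destruct (Hd (mkposreal e1 He1)) as [d1 Hd1]. simpl in Hd1.
  destruct (Hw d1 (cond_pos d1)) as [d2 [Hd2 Hd2']].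
  assert (Hd3 : 0 < Rmin d0 (Rmin d1 d2)).
  { apply Rmin_pos; [apply cond_pos | apply Rmin_pos; [apply cond_pos | lra]]. }
  exists (mkposreal _ Hd3). intros hh Hh0 Hh. simpl in Hh.
  assert (Hh1 : Rabs hh < d0) by (eapply Rlt_le_trans; [exact Hh | apply Rmin_l]).
  assert (Hh2 : Rabs hh < d1) by (eapply Rlt_le_trans; [exact Hh | eapply Rle_trans; [apply Rmin_r | apply Rmin_l]]).
  assert (Hh3 : Rabs hh < d2) by (eapply Rlt_le_trans; [exact Hh | eapply Rle_trans; [apply Rmin_r | apply Rmin_r]]).
  set (s := r + hh). set (e := w s - w r).
  assert (Es : s - r = hh) by (unfold s; ring).
  assert (Hg : g s (w s) = g r (w r)) by (apply Hd0; rewrite Es; auto).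
  assert (Hwe : Rabs e < d1).
  { destruct (Req_dec hh 0) as [->|Hne]; [contradiction|].
    unfold e. apply Hd2'. split.
    - split; [exact I| intro Hc; apply Hh0; unfold s in Hc; lra].
    - simpl. unfold R_dist. rewrite Es. exact Hh3. }
  assert (H1 := Hd1 s (w s) ltac:(rewrite Es; auto) Hwe).
  rewrite Hg, Es in H1. fold e in H1.
  replace (g r (w r) - g r (w r) - (ls * hh + ly * e)) with (- (ls * hh + ly * e)) in H1 by ring.
  rewrite Rabs_Ropp in H1.
  assert (Hhp : 0 < Rabs hh) by (apply Rabs_pos_lt; auto).
  assert (He1a : e1 <= a / 2) by apply Rmin_l.
  assert (He1b : e1 <= eps * a / (2 * K)) by apply Rmin_r.
  assert (HM : Rmax (Rabs hh) (Rabs e) <= K * Rabs hh).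
  { destruct (Rle_dec (Rabs e) (Rabs hh)) as [Hle|Hgt].
    - rewrite Rmax_left by lra. nra.
    - rewrite Rmax_right in H1 by lra. rewrite Rmax_right by lra.
      assert (T : Rabs (ly * e) <= Rabs (ls * hh + ly * e) + Rabs (ls * hh)).
      { replace (ly * e) with ((ls * hh + ly * e) + - (ls * hh)) at 1 by ring.
        rewrite <- (Rabs_Ropp (ls * hh)). apply Rabs_triang. }
      rewrite !Rabs_mult in T. fold a in T.
      assert (Hl := Rabs_pos ls). assert (Hee := Rabs_pos e).
      assert (a * Rabs e <= 2 * Rabs ls * Rabs hh) by nra.
      unfold K. apply (Rmult_le_reg_l a); [lra|].
      replace (a * ((2 * Rabs ls / a + 1) * Rabs hh)) with (2 * Rabs ls * Rabs hh + a * Rabs hh) by (field; lra).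
      nra. }
  assert (Hfin : Rabs (ls * hh + ly * e) <= e1 * (K * Rabs hh)).
  { eapply Rle_trans; [exact H1|]. apply Rmult_le_compat_l; lra. }
  replace (e / hh - - ls / ly) with ((ls * hh + ly * e) / (ly * hh)).
  2: { field. split; auto. }
  unfold Rdiv. rewrite Rabs_mult, Rabs_inv, Rabs_mult. fold a.
  apply (Rmult_lt_reg_r (a * Rabs hh)); [nra|].
  rewrite Rmult_assoc, Rinv_l by nra. rewrite Rmult_1_r.
  apply Rle_lt_trans with (e1 * (K * Rabs hh)); auto.
  assert (e1 * K <= eps * a / 2).
  { apply Rle_trans with (eps * a / (2 * K) * K). apply Rmult_le_compat_r; lra.
    right. field. lra. }
  assert (e1 * K * Rabs hh <= eps * a / 2 * Rabs hh) by (apply Rmult_le_compat_r; lra).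
  assert (0 < eps * a * Rabs hh) by (apply Rmult_lt_0_compat; [apply Rmult_lt_0_compat|]; lra).
  nra.
Qed.

Lemma cont_eps f x : continuity_pt f x <->
  (forall eps, 0 < eps -> exists d, 0 < d /\ forall y, Rabs (y - x) < d -> Rabs (f y - f x) < eps).
Proof.
  split.
  - intros H eps He. destruct (H eps He) as [d [Hd Hd']]. exists d. split; auto.
    intros y Hy. destruct (Req_dec y x) as [->|Hne].
    + replace (f x - f x) with 0 by ring. rewrite Rabs_R0. auto.
    + apply (Hd' y). split; [split; [exact I| auto] | exact Hy].
  - intros H eps He. destruct (H eps He) as [d [Hd Hd']]. exists d. split; auto.
    intros y [_ Hy]. apply Hd'. exact Hy.
Qed.

Lemma cont_impl (g : R -> R -> R) (w lo : R -> R) r :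
  (exists d, 0 < d /\ forall s, Rabs (s - r) < d ->
     g s (w s) = 0 /\ lo s < w s < lo s + PI /\
     (forall y1 y2, lo s < y1 -> y1 < y2 -> y2 < lo s + PI -> g s y1 < g s y2)) ->
  continuity_pt lo r -> (forall y, lo r < y < lo r + PI -> continuity_pt (fun s => g s y) r) -> continuity_pt w r.
Proof.
  intros [d [Hd Hs]] Hlo Hg. apply cont_eps. intros eps Heps.
  destruct (Hs r) as [G0 [[L0 L1] M0]]. { replace (r - r) with 0 by ring. rewrite Rabs_R0; lra. }
  set (e' := Rmin eps (Rmin ((w r - lo r) / 2) ((lo r + PI - w r) / 2))).
  assert (He' : 0 < e') by (unfold e'; repeat apply Rmin_pos; lra).
  assert (He1 : e' <= eps) by apply Rmin_l.
  assert (He2 : e' <= (w r - lo r) / 2) by (eapply Rle_trans; [apply Rmin_r | apply Rmin_l]).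
  assert (He3 : e' <= (lo r + PI - w r) / 2) by (eapply Rle_trans; [apply Rmin_r | apply Rmin_r]).
  assert (Gm : g r (w r - e') < 0) by (rewrite <- G0; apply M0; lra).
  assert (Gp : 0 < g r (w r + e')) by (rewrite <- G0; apply M0; lra).
  destruct (proj1 (cont_eps _ _) Hlo e' He') as [d1 [Hd1 Hd1']].
  destruct (proj1 (cont_eps _ _) (Hg (w r - e') ltac:(lra)) (- g r (w r - e')) ltac:(lra)) as [d2 [Hd2 Hd2']].
  destruct (proj1 (cont_eps _ _) (Hg (w r + e') ltac:(lra)) (g r (w r + e')) ltac:(lra)) as [d3 [Hd3 Hd3']].
  exists (Rmin d (Rmin d1 (Rmin d2 d3))). split; [repeat apply Rmin_pos; lra|].
  intros s Hsr.
  assert (A0 : Rabs (s - r) < d) by (eapply Rlt_le_trans; [exact Hsr | apply Rmin_l]).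
  assert (A1 : Rabs (s - r) < d1) by (eapply Rlt_le_trans; [exact Hsr | eapply Rle_trans; [apply Rmin_r | apply Rmin_l]]).
  assert (A2 : Rabs (s - r) < d2) by (eapply Rlt_le_trans; [exact Hsr | eapply Rle_trans; [apply Rmin_r | eapply Rle_trans; [apply Rmin_r | apply Rmin_l]]]).
  assert (A3 : Rabs (s - r) < d3) by (eapply Rlt_le_trans; [exact Hsr | eapply Rle_trans; [apply Rmin_r | eapply Rle_trans; [apply Rmin_r | apply Rmin_r]]]).
  destruct (Hs s A0) as [Gs [[Ls1 Ls2] Ms]].
  specialize (Hd1' s A1). specialize (Hd2' s A2). specialize (Hd3' s A3). simpl in Hd2', Hd3'.
  apply Rabs_def2 in Hd1'. apply Rabs_def2 in Hd2'. apply Rabs_def2 in Hd3'.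
  assert (Gsm : g s (w r - e') < 0) by lra.
  assert (Gsp : 0 < g s (w r + e')) by lra.
  assert (U : w s < w r + e').
  { destruct (Rlt_le_dec (w s) (w r + e')) as [h|h]; auto. exfalso.
    destruct (Req_dec (w s) (w r + e')) as [h'|h'].
    - rewrite h' in Gs. lra.
    - assert (g s (w r + e') < g s (w s)) by (apply Ms; lra). lra. }
  assert (L : w r - e' < w s).
  { destruct (Rlt_le_dec (w r - e') (w s)) as [h|h]; auto. exfalso.
    destruct (Req_dec (w s) (w r - e')) as [h'|h'].
    - rewrite h' in Gs. lra.
    - assert (g s (w s) < g s (w r - e')) by (apply Ms; lra). lra. }
  apply Rabs_def1; lra.
Qed.

Lemma PY_pos p : hyp p -> forall x y, x < y < x + PI -> PY p x y > 0.
Proof.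
  intros H x y Hb. destruct (half_facts x y Hb) as [Hs [Hc [ES [EC [HS HC]]]]].
  assert (Q := Q_pos p H x y Hb).
  unfold PY. apply Rdiv_lt_0_compat; [|nra].
  rewrite ES, EC.
  replace (Fd p x y * (2 * cos ((y - x) / 2) * cos ((y - x) / 2)) +
    Fn p x y * (2 * sin ((y - x) / 2) * cos ((y - x) / 2))) with
    (2 * cos ((y - x) / 2) * (Fd p x y * cos ((y - x) / 2) + Fn p x y * sin ((y - x) / 2))) by ring.
  nra.
Qed.

Lemma PX_neg p : hyp p -> forall x y, x < y < x + PI -> PX p x y < 0.
Proof.
  intros H x y Hb. destruct (half_facts x y Hb) as [Hs [Hc [ES [EC [HS HC]]]]].
  assert (HF := F_pos p H x y ltac:(lra)).
  destruct H as [_ [_ H3]]. specialize (H3 x).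
  unfold PX. unfold Rdiv. apply Rmult_neg_pos.
  - assert (0 < (p x + Derive (Derive p) x) * sin (y - x) * (1 + cos (y - x))).
    { apply Rmult_lt_0_compat; [apply Rmult_lt_0_compat|]; lra. }
    assert (0 < Fn p x y * sin (y - x)) by nra. lra.
  - apply Rinv_0_lt_compat. nra.
Qed.

Definition QY p x y := ((p y + Derive (Derive p) y) * sin (y - x) * (1 + cos (y - x)) + En p x y * sin (y - x)) / ((1 + cos (y - x)) * (1 + cos (y - x))).

Lemma QY_pos p : hyp p -> forall x y, x < y < x + PI -> QY p x y > 0.
Proof.
  intros H x y Hb. destruct (half_facts x y Hb) as [Hs [Hc [ES [EC [HS HC]]]]].
  assert (HE := E_pos p H x y Hb).
  destruct H as [_ [_ H3]]. specialize (H3 y).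
  unfold QY. apply Rdiv_lt_0_compat; [|nra].
  assert (0 < (p y + Derive (Derive p) y) * sin (y - x) * (1 + cos (y - x))).
  { apply Rmult_lt_0_compat; [apply Rmult_lt_0_compat|]; lra. }
  assert (0 < En p x y * sin (y - x)) by nra. lra.
Qed.

Lemma Pse_dy p : hyp p -> forall x y, 1 + cos (y - x) <> 0 ->
  derivable_pt_lim (fun y => Pse p x y) y (QY p x y).
Proof.
  intros H x y Hc. destruct H as [H1 [H2 H3]].
  unfold Pse, QY, En. apply is_derive_Reals. auto_derive.
  - repeat split; auto.
  - fix_eta. unfold Rminus. field. unfold Rminus in Hc. auto.
Qed.

Lemma Phe_dy p : hyp p -> forall x y, 1 + cos (y - x) <> 0 ->
  derivable_pt_lim (fun y => Phe p x y) y (PY p x y).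
Proof.
  intros H x y Hc. eapply dl_eq.
  - apply (derivable_pt_lim_comp_2d (Phe p) (fun _ => x) (fun t => t) y).
    + apply Phe_diff; auto.
    + apply derivable_pt_lim_const.
    + apply derivable_pt_lim_id.
  - ring.
Qed.

Lemma Phe_dx p : hyp p -> forall x y, 1 + cos (y - x) <> 0 ->
  derivable_pt_lim (fun x => Phe p x y) x (PX p x y).
Proof.
  intros H x y Hc. eapply dl_eq.
  - apply (derivable_pt_lim_comp_2d (Phe p) (fun t => t) (fun _ => y) x).
    + apply Phe_diff; auto.
    + apply derivable_pt_lim_id.
    + apply derivable_pt_lim_const.
  - ring.
Qed.

Lemma dom_c x y : x < y < x + PI -> 1 + cos (y - x) <> 0.
Proof. intro Hb. destruct (half_facts x y Hb) as [_ [_ [_ [_ [_ HC]]]]]. lra. Qed.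

Lemma mono p : hyp p -> forall x y1 y2, x < y1 -> y1 < y2 -> y2 < x + PI -> Phe p x y1 < Phe p x y2.
Proof.
  intros H x y1 y2 H1 H2 H3.
  destruct (MVT_cor2 (fun y => Phe p x y) (fun y => PY p x y) y1 y2 H2) as [c [Ec Hc]].
  - intros c Hc. apply Phe_dy; auto. apply dom_c. lra.
  - assert (PY p x c > 0) by (apply PY_pos; auto; lra). nra.
Qed.

Lemma exist_y p : hyp p -> forall a r, 0 < r -> exists y, a < y < a + PI /\ Rad1 p a y = r.
Proof.
  intros H a r Hr.
  set (G := fun y => Fn p a y - r * (1 + cos (y - a))).
  assert (HG : continuity G).
  { intro y. destruct H as [H1 [H2 H3]]. apply continuity_pt_filterlim. apply (@ex_derive_continuous R_AbsRing R_NormedModule).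
    unfold G, Fn. auto_derive. repeat split; auto. }
  assert (Ga : G a < 0).
  { unfold G, Fn. replace (a - a) with 0 by ring. rewrite cos_0, sin_0. lra. }
  assert (Gb : 0 < G (a + PI)).
  { unfold G. replace (a + PI - a) with PI by ring. rewrite cos_PI.
    assert (Fn p a (a + PI) > 0) by (apply F_pos; auto; assert (Hpi := PI_RGT_0); lra). lra. }
  assert (Hpi := PI_RGT_0).
  destruct (IVT G a (a + PI) HG ltac:(lra) Ga Gb) as [z [Hz Gz]].
  assert (Hza : z <> a) by (intro E; subst z; lra).
  assert (Hzb : z <> a + PI) by (intro E; rewrite E in Gz; lra).
  assert (Hb : a < z < a + PI) by lra.
  exists z. split; auto.
  rewrite Rad1_eq; auto.
  - unfold Phe. unfold G in Gz. assert (Hc := dom_c a z Hb).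
    replace (Fn p a z) with (r * (1 + cos (z - a))) by lra. field. auto.
  - assert (Fn p a z > 0) by (apply F_pos; auto; lra). lra.
Qed.

Lemma u_props p A : hyp p -> phase_inverse p A -> forall a s, 0 < s ->
  a < A a s < a + PI /\ Phe p a (A a s) = s.
Proof.
  intros H HA a s Hs. destruct (HA a s Hs) as [Hb HR]. split; auto.
  rewrite <- Rad1_eq; auto. assert (Fn p a (A a s) > 0) by (apply F_pos; auto; lra). lra.
Qed.

Lemma near_pos r s : 0 < r -> Rabs (s - r) < r -> 0 < s.
Proof. intros Hr Hs. apply Rabs_def2 in Hs. lra. Qed.

Lemma u_cont p A : hyp p -> phase_inverse p A -> forall a r, 0 < r -> continuity_pt (A a) r.
Proof.
  intros H HA a r Hr.
  apply (cont_impl (fun s y => Phe p a y - s) (A a) (fun _ => a) r).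
  - exists r. split; auto. intros s Hs. assert (Hs0 := near_pos r s Hr Hs).
    destruct (u_props p A H HA a s Hs0) as [Hb HP]. split; [lra|]. split; auto.
    intros y1 y2 Hy1 Hy2 Hy3. assert (Phe p a y1 < Phe p a y2) by (apply mono; auto). lra.
  - apply continuity_pt_const. intros ? ?. reflexivity.
  - intros y Hy. apply (continuity_pt_minus (fun _ => Phe p a y) (fun s => s)).
    + apply continuity_pt_const. intros ? ?. reflexivity.
    + apply continuity_pt_id.
Qed.

Lemma u_deriv p A : hyp p -> phase_inverse p A -> forall a r, 0 < r ->
  derivable_pt_lim (A a) r (/ PY p a (A a r)).
Proof.
  intros H HA a r Hr.
  destruct (u_props p A H HA a r Hr) as [Hb HP].
  assert (HPY := PY_pos p H a (A a r) Hb).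
  eapply dl_eq.
  - apply (ift (fun s y => Phe p a y - s) (A a) r (0 - 1) (PY p a (A a r) - 0)).
    + apply (dd_minus (fun s y => Phe p a y) (fun s y => s)).
      * apply (dd_snd (fun y => Phe p a y)). apply Phe_dy; auto. apply dom_c; auto.
      * apply dd_id1.
    + lra.
    + apply (u_cont p A); auto.
    + exists (mkposreal r Hr). intros s Hs. simpl in Hs.
      assert (Hs0 := near_pos r s Hr Hs).
      destruct (u_props p A H HA a s Hs0) as [_ HP']. rewrite HP, HP'. ring.
  - field. lra.
Qed.

Lemma w_props p A : hyp p -> phase_inverse p A -> forall a s, 0 < s ->
  A a s < T2_alpha p A a s < A a s + PI /\ Phe p (A a s) (T2_alpha p A a s) = Pse p a (A a s).
Proof.
  intros H HA a s Hs. destruct (HA a s Hs) as [Hb _].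
  assert (HE := E_pos p H a (A a s) Hb).
  assert (E2 : Rad2 p a (A a s) = Pse p a (A a s)) by (apply Rad2_eq; auto; lra).
  assert (Hv : 0 < Rad2 p a (A a s)).
  { rewrite E2. unfold Pse. destruct (half_facts a (A a s) Hb) as [_ [_ [_ [_ [_ HC]]]]].
    apply Rdiv_lt_0_compat; lra. }
  unfold T2_alpha, T_alpha, T_R.
  destruct (u_props p A H HA (A a s) (Rad2 p a (A a s)) Hv) as [Hb' HP].
  split; auto. rewrite HP. auto.
Qed.

Lemma dl_cont f x l : derivable_pt_lim f x l -> continuity_pt f x.
Proof. intro Hf. apply derivable_continuous_pt. exists l. exact Hf. Qed.

Lemma dl_comp f g x a b : derivable_pt_lim f x a -> derivable_pt_lim g (f x) b ->
  derivable_pt_lim (fun t => g (f t)) x (b * a).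
Proof. intros. apply (derivable_pt_lim_comp f g x a b); auto. Qed.

Lemma w_cont p A : hyp p -> phase_inverse p A -> forall a r, 0 < r ->
  continuity_pt (fun s => T2_alpha p A a s) r.
Proof.
  intros H HA a r Hr.
  apply (cont_impl (fun s y => Phe p (A a s) y - Pse p a (A a s)) (fun s => T2_alpha p A a s) (A a) r).
  - exists r. split; auto. intros s Hs. assert (Hs0 := near_pos r s Hr Hs).
    destruct (w_props p A H HA a s Hs0) as [Hb HP]. split; [lra|]. split; auto.
    intros y1 y2 Hy1 Hy2 Hy3. assert (Phe p (A a s) y1 < Phe p (A a s) y2) by (apply mono; auto). lra.
  - apply (u_cont p A); auto.
  - intros y Hy. eapply dl_cont.
    apply (dl_minus (fun s => Phe p (A a s) y) (fun s => Pse p a (A a s))).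
    + apply (derivable_pt_lim_comp_2d (Phe p) (A a) (fun _ => y) r).
      * apply Phe_diff; auto. apply dom_c; auto.
      * apply (u_deriv p A); auto.
      * apply derivable_pt_lim_const.
    + apply dl_comp. apply (u_deriv p A); auto.
      apply Pse_dy; auto. apply dom_c. destruct (u_props p A H HA a r Hr); auto.
Qed.

Lemma w_deriv p A : hyp p -> phase_inverse p A -> forall a r, 0 < r ->
  exists d, derivable_pt_lim (fun s => T2_alpha p A a s) r d /\ 0 < d.
Proof.
  intros H HA a r Hr.
  destruct (u_props p A H HA a r Hr) as [Hb HP].
  destruct (w_props p A H HA a r Hr) as [Hb2 HP2].
  set (u' := / PY p a (A a r)).
  assert (Hu' : 0 < u') by (apply Rinv_0_lt_compat, PY_pos; auto).
  set (w := fun s => T2_alpha p A a s).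
  set (lx := PX p (A a r) (w r)). set (ly := PY p (A a r) (w r)). set (q := QY p a (A a r)).
  assert (Hlx : lx < 0) by (apply PX_neg; auto).
  assert (Hly : ly > 0) by (apply PY_pos; auto).
  assert (Hq : q > 0) by (apply QY_pos; auto).
  exists (u' * (q - lx) / ly). split.
  2: { apply Rdiv_lt_0_compat; [apply Rmult_lt_0_compat|]; lra. }
  eapply dl_eq.
  - apply (ift (fun s y => Phe p (A a s) y - Pse p a (A a s)) w r
       ((lx * u' + ly * 0) - q * u') ((lx * 0 + ly * 1) - 0)).
    + apply (dd_minus (fun s y => Phe p (A a s) y) (fun s y => Pse p a (A a s))).
      * apply (differentiable_pt_lim_comp (Phe p) (fun s y => A a s) (fun s y => y) r (w r)).
        -- apply Phe_diff; auto. apply dom_c; auto.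
        -- apply (dd_fst (A a)). apply (u_deriv p A); auto.
        -- apply dd_id2.
      * apply (dd_fst (fun s => Pse p a (A a s))). apply dl_comp.
        apply (u_deriv p A); auto. apply Pse_dy; auto. apply dom_c; auto.
    + lra.
    + apply (w_cont p A); auto.
    + exists (mkposreal r Hr). intros s Hs. simpl in Hs.
      assert (Hs0 := near_pos r s Hr Hs).
      destruct (w_props p A H HA a s Hs0) as [_ HP']. unfold w. rewrite HP', HP2. ring.
  - field. lra.
Qed.

Theorem mainTheorem5 :
  forall p : R -> R, oval_support p ->
    (exists A : R -> R -> R, phase_inverse p A) /\
    (forall A : R -> R -> R, phase_inverse p A ->
       forall a r : R, 0 < r ->
         (exists d, is_derive (fun s => T_alpha p A a s) r d /\ 0 < d) /\
         (exists d, is_derive (fun s => T2_alpha p A a s) r d /\ 0 < d)).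
Proof.
  intros p Hov. assert (H := hyp_of p Hov). split.
  - exists (fun a r => epsilon (inhabits 0) (fun y => 0 < r -> a < y < a + PI /\ Rad1 p a y = r)).
    intros a r Hr.
    apply (epsilon_spec (inhabits 0) (fun y => 0 < r -> a < y < a + PI /\ Rad1 p a y = r)); auto.
    destruct (exist_y p H a r Hr) as [y Hy]. exists y. intros _. exact Hy.
  - intros A HA a r Hr. split.
    + exists (/ PY p a (A a r)). split.
      * apply is_derive_Reals. unfold T_alpha. apply (u_deriv p A); auto.
      * apply Rinv_0_lt_compat, PY_pos; auto. destruct (u_props p A H HA a r Hr); auto.
    + destruct (w_deriv p A H HA a r Hr) as [d [Hd Hd0]]. exists d. split; auto.
      apply is_derive_Reals. exact Hd.
Qed.
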